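(* Let $g\ge0$, $n\ge1$. Let $Ch_1,Ch_2\in\mathbf{K}$ be two chambers and $\mathcal{A}\in Ch_1$, $\mathcal{B}\in Ch_2$ weight data. If $Ch_1\le Ch_2$, then the category $\mathcal{G}_{g,\mathcal{A}}$ is a full subcategory of $\mathcal{G}_{g,\mathcal{B}}$.
   Context: A weight datum is $\mathcal{A}=(a_1,\dots,a_n)$ with $a_i\in\mathbb{Q}\cap(0,1]$ and $2g-2+\sum_i a_i>0$; $\mathcal{D}_{g,n}\subset\mathbb{R}^n$ is the set of weight data. For $S\subseteq\{1,\dots,n\}$ with $2\le|S|\le n$ if $g\ge1$ (resp. $2\le|S|\le n-2$ if $g=0$), the wall $w_S$ is the locus $\sum_{i\in S}a_i=1$. The chambers are the connected components of the complement in $\mathcal{D}_{g,n}$ of all walls; each is determined by the direction ($<1$ or $>1$) of $\sum_{i\in S}a_i$ for each such $S$. $\mathbf{K}$ is the set of chambers, partially ordered by $Ch_1\le Ch_2$ iff for every such $S$, $\sum_{i\in S}a_i>1$ on $Ch_1$ implies $\sum_{i\in S}b_i>1$ on $Ch_2$. A $(g,\mathcal{A})$-stable graph is a finite connected graph $G$ (loops and multiple edges allowed) with vertex weight $w:V(G)\to\mathbb{Z}_{\ge0}$ and $n$ legs labelled $1,\dots,n$ attached via $m:\{1,\dots,n\}\to V(G)$, with $b_1(G)+\sum_v w(v)=g$ and $2w(v)-2+|v|_E+|v|_{\mathcal{A}}>0$ for every vertex $v$, where $|v|_E$ is the number of edge half-edges at $v$ (loops counted twice) and $|v|_{\mathcal{A}}=\sum_{m(i)=v}a_i$.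 $\mathcal{G}_{g,\mathcal{A}}$ is the category whose objects are $(g,\mathcal{A})$-stable graphs and whose morphisms are compositions of isomorphisms of weighted marked graphs and weighted edge contractions. *)

(* Defs.v *)
From HB Require Import structures.
From mathcomp Require Import all_boot all_order all_algebra.
Set Implicit Arguments. Unset Strict Implicit. Unset Printing Implicit Defensive.
Import Order.TTheory GRing.Theory Num.Theory.

Definition weight_datum (g n : nat) (A : 'I_n -> rat) : Prop :=
  (forall i, (0 < A i)%R /\ (A i <= 1)%R) /\
  (0 < (2 * g%:R - 2 + \sum_(i < n) A i))%R.

Definition wall_index (g n : nat) (S : {set 'I_n}) : bool :=
  if g is 0 then (2 <= #|S| <= n - 2)%N else (2 <= #|S| <= n)%N.

Definition wsum (n : nat) (A : 'I_n -> rat) (S : {set 'I_n}) : rat :=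
  (\sum_(i in S) A i)%R.

(* A lies in some chamber: A lies on no wall *)
Definition in_chamber (g n : nat) (A : 'I_n -> rat) : Prop :=
  forall S, wall_index g S -> wsum A S <> 1%R.

(* Order on chambers, evaluated at representatives A in Ch_1, B in Ch_2
   (a chamber is determined by the direction of sum_S a_i for each wall S) *)
Definition chamber_le (g n : nat) (A B : 'I_n -> rat) : Prop :=
  forall S, wall_index g S -> (1 < wsum A S)%R -> (1 < wsum B S)%R.

(* vertices 'I_nv, edges 'I_ne with (unordered) endpoints, loops and multiple
   edges allowed, vertex weights, n legs *)
Record wmgraph (n : nat) := WMGraph {
  nv : nat;
  ne : nat;
  ends : 'I_ne -> 'I_nv * 'I_nv;
  wt : 'I_nv -> nat;
  leg : 'I_n -> 'I_nv }.

Definition same_ends (k : nat) (p q : 'I_k * 'I_k) : bool :=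
  (p == q) || (p == (q.2, q.1)).

Definition adj (n : nat) (G : wmgraph n) : rel 'I_(nv G) :=
  fun x y => [exists j, same_ends (ends j) (x, y)].

Definition connected_graph (n : nat) (G : wmgraph n) : Prop :=
  (0 < nv G)%N /\ forall x y, connect (@adj n G) x y.

Definition betti1 (n : nat) (G : wmgraph n) : nat := (ne G + 1 - nv G)%N.

Definition valE (n : nat) (G : wmgraph n) (v : 'I_(nv G)) : nat :=
  (\sum_(j : 'I_(ne G)) (((ends j).1 == v) + ((ends j).2 == v)))%N.

Definition valA (n : nat) (A : 'I_n -> rat) (G : wmgraph n) (v : 'I_(nv G)) : rat :=
  (\sum_(i | leg G i == v) A i)%R.

Definition stable (g n : nat) (A : 'I_n -> rat) (G : wmgraph n) : Prop :=
  connected_graph G /\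
  (betti1 G + (\sum_(v : 'I_(nv G)) wt v) = g)%N /\
  forall v : 'I_(nv G),
    (0 < 2 * (wt v)%:R - 2 + (valE v)%:R + valA A v)%R.

(* a map G -> H: vertex map, and (contravariant) identification of the edges of H
   with edges of G *)
Record gmap (n : nat) (G H : wmgraph n) := GMap {
  vmap : 'I_(nv G) -> 'I_(nv H);
  emap : 'I_(ne H) -> 'I_(ne G) }.

Definition gcomp (n : nat) (G H K : wmgraph n) (f : gmap G H) (h : gmap H K)
  : gmap G K := GMap (vmap h \o vmap f) (emap f \o emap h).

Definition edge_compat (n : nat) (G H : wmgraph n) (f : gmap G H) : Prop :=
  forall j : 'I_(ne H),
    same_ends (vmap f (ends (emap f j)).1, vmap f (ends (emap f j)).2) (ends j).

Definition is_iso (n : nat) (G H : wmgraph n) (f : gmap G H) : Prop :=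
  bijective (vmap f) /\ bijective (emap f) /\ edge_compat f /\
  (forall v, wt (vmap f v) = wt v) /\
  (forall i, leg H i = vmap f (leg G i)).

Definition is_contraction (n : nat) (G H : wmgraph n) (f : gmap G H)
  (e : 'I_(ne G)) : Prop :=
  injective (emap f) /\ (forall j, emap f j != e) /\
  (forall e', e' != e -> exists j, emap f j = e') /\
  edge_compat f /\
  (forall x y, vmap f x = vmap f y <-> (x = y \/ same_ends (x, y) (ends e))) /\
  (forall v', exists v, vmap f v = v') /\
  (forall v' : 'I_(nv H),
     wt v' = ((\sum_(v | vmap f v == v') wt v)
              + (((ends e).1 == (ends e).2) && (vmap f (ends e).1 == v')))%N) /\
  (forall i, leg H i = vmap f (leg G i)).

Definition elementary (n : nat) (G H : wmgraph n) (f : gmap G H) : Prop :=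
  is_iso f \/ exists e, is_contraction f e.

Inductive morph (n : nat) (P : wmgraph n -> Prop)
  : forall G H : wmgraph n, gmap G H -> Prop :=
| morph_elem G H (f : gmap G H) : P G -> P H -> elementary f -> morph P f
| morph_comp G H K (f : gmap G H) (h : gmap H K) :
    morph P f -> morph P h -> morph P (gcomp f h).

Definition full_subcategory (n : nat) (P Q : wmgraph n -> Prop) : Prop :=
  (forall G, P G -> Q G) /\
  (forall G H (f : gmap G H), P G -> P H -> (morph P f <-> morph Q f)).

(* Main.v *)
Require Import Defs.
From HB Require Import structures.
From mathcomp Require Import all_boot all_order all_algebra.
From mathcomp Require Import zify ring lra.
Set Implicit Arguments. Unset Strict Implicit. Unset Printing Implicit Defensive.
Import Order.TTheory GRing.Theory Num.Theory.
Local Open Scope ring_scope.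

Lemma same_ends_cnt k (p q : 'I_k * 'I_k) (v : 'I_k) : same_ends p q ->
  ((p.1 == v) + (p.2 == v) = (q.1 == v) + (q.2 == v))%N.
Proof. by case/orP => /eqP -> //=; rewrite addnC. Qed.

Lemma sum_eq1 (T : finType) (P : pred T) (a : T) :
  (\sum_(v | P v) (a == v) = P a)%N.
Proof.
rewrite big_mkcond (bigD1 a) //= eqxx big1 ?addn0; first by case: (P a).
by move=> i /negPf; rewrite eq_sym => ->; case: (P i).
Qed.

Lemma valE_fiber n (G H : wmgraph n) (f : gmap G H) (Hc : edge_compat f)
  (Hinj : injective (emap f)) (v' : 'I_(nv H)) :
  (\sum_(v | vmap f v == v') valE v = valE v' +
    \sum_(j | j \notin [set emap f j' | j' in setT])
       ((vmap f (ends j).1 == v') + (vmap f (ends j).2 == v')))%N.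
Proof.
rewrite /valE exchange_big /=.
under eq_bigr => j _ do rewrite big_split /= !sum_eq1.
rewrite (bigID (fun j => j \in [set emap f j' | j' in setT])) /=.
congr (_ + _)%N.
rewrite big_imset /=; last by move=> x y _ _; apply: Hinj.
apply: eq_big => [j|j _]; first by rewrite in_setT.
by rewrite (same_ends_cnt _ (Hc j)).
Qed.

Definition stab n (A : 'I_n -> rat) (G : wmgraph n) (v : 'I_(nv G)) : rat :=
  2 * (wt v)%:R - 2 + (valE v)%:R + valA A v.

Lemma valA_fiber n (A : 'I_n -> rat) (G H : wmgraph n) (f : gmap G H)
  (Hl : forall i, leg H i = vmap f (leg G i)) (v' : 'I_(nv H)) :
  valA A v' = \sum_(v | vmap f v == v') valA A v.
Proof.
rewrite /valA.
under eq_bigl => i do rewrite Hl.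
rewrite (partition_big (leg G) (fun v => vmap f v == v')) //=.
apply: eq_bigr => v /eqP hv; apply: eq_bigl => i.
by case: (eqVneq (leg G i) v) => [->|]; rewrite ?hv ?eqxx ?andbF.
Qed.

Lemma same_ends_in k (u w : 'I_k) (p : 'I_k * 'I_k) :
  same_ends (u, w) p -> (u == p.1) || (u == p.2).
Proof. by case: p => a b; case/orP => /eqP [-> _]; rewrite eqxx ?orbT. Qed.

Lemma big_pair (R : Type) (idx : R) (op : Monoid.com_law idx) (I : finType)
  (P : pred I) (F : I -> R) x y : x != y ->
  P =1 (fun u => (u == x) || (u == y)) ->
  \big[op/idx]_(u | P u) F u = op (F x) (F y).
Proof.
move=> hxy hP; rewrite (bigD1 x) ?hP ?eqxx //; congr (op _ _).
apply: big_pred1 => u /=; rewrite hP.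
case: (eqVneq u x) => [->|]; last by rewrite andbT.
by rewrite (negbTE hxy).
Qed.

Lemma pres_iso n (A : 'I_n -> rat) (G H : wmgraph n) (f : gmap G H) :
  is_iso f -> (forall v : 'I_(nv G), 0 < stab A v) -> forall v' : 'I_(nv H), 0 < stab A v'.
Proof.
move=> [[vi hvK hKv] [[ei heK hKe] [Hc [Hw Hl]]]] Hst v'.
rewrite -[v']hKv; move: (vi v') => v.
have Hinj : injective (emap f) by apply: can_inj heK.
have Hfib : (fun u => vmap f u == vmap f v) =1 pred1 v.
  by move=> u /=; rewrite (can_eq hvK).
have E := valE_fiber Hc Hinj (vmap f v).
rewrite (big_pred1 v) // big_pred0 ?addn0 in E; last first.
  by move=> j /=; rewrite -[j]hKe imset_f ?in_setT.
have EA := valA_fiber A Hl (vmap f v).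
rewrite (big_pred1 v) // in EA.
by move: (Hst v); rewrite /stab Hw E EA.
Qed.

Lemma pres_contr n (A : 'I_n -> rat) (G H : wmgraph n) (f : gmap G H) e :
  is_contraction f e -> (forall v : 'I_(nv G), 0 < stab A v) -> forall v' : 'I_(nv H), 0 < stab A v'.
Proof.
move=> [Hinj [Hne [Hse [Hc [Hiff [Hsurj [Hwt Hl]]]]]]] Hst v'.
set x := (ends e).1; set y := (ends e).2.
have Hxy : vmap f y = vmap f x.
  by apply/Hiff; right; apply/orP; right; apply/eqP.
have Hmiss : forall j, (j \notin [set emap f j' | j' in setT]) = (j == e).
  move=> j; case: (eqVneq j e) => [->|hj].
    apply/negP => /imsetP [j' _ hj']; by move: (Hne j'); rewrite -hj' eqxx.
  by case: (Hse j hj) => j' <-; rewrite imset_f ?in_setT.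
have E := valE_fiber Hc Hinj v'.
rewrite (eq_bigl (pred1 e)) ?big_pred1_eq // in E.
have EA := valA_fiber A Hl v'.
have EW := Hwt v'.
have Hfx : forall u, vmap f u = vmap f x -> (u == x) || (u == y).
  move=> u /Hiff [->|/same_ends_in //]; by rewrite eqxx.
case: (eqVneq v' (vmap f x)) => [hv|hv].
- rewrite hv in E EW EA *; rewrite Hxy eqxx in E; rewrite eqxx andbT in EW.
  case: (eqVneq x y) => [hxy|hxy].
  + have Hfib : (fun u => vmap f u == vmap f x) =1 pred1 x.
      move=> u /=; apply/eqP/eqP => [/Hfx|->] //.
      by rewrite -hxy orbb => /eqP.
    rewrite (big_pred1 x Hfib) in E; rewrite (big_pred1 x Hfib) in EA; rewrite (big_pred1 x Hfib) in EW.
    rewrite -/x -/y -hxy eqxx /= in EW.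
    have Er : ((valE (vmap f x))%:R + 2 = (valE x)%:R :> rat) by rewrite E addnn natrD.
    move: (Hst x); rewrite /stab EW EA natrD -Er; lra.
  + have Hfib : (fun u => vmap f u == vmap f x) =1 (fun u => (u == x) || (u == y)).
      move=> u /=; apply/eqP/idP => [/Hfx //|/orP [/eqP ->|/eqP ->]] //.
    rewrite (big_pair _ _ hxy Hfib) in E; rewrite (big_pair _ _ hxy Hfib) /= in EA.
    rewrite (big_pair _ _ hxy Hfib) (negbTE hxy) /= addn0 in EW.
    have Er : ((valE (vmap f x))%:R + 2 = (valE x)%:R + (valE y)%:R :> rat).
      by rewrite -natrD -E natrD.
    move: (Hst x) (Hst y) Er; rewrite /stab EW EA natrD /=; lra.
- case: (Hsurj v') => v hv'.
  have Hfib : (fun u => vmap f u == v') =1 pred1 v.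
    move=> u /=; apply/eqP/eqP => [|->] //.
    rewrite -hv' => E1; have := E1.
    move=> /Hiff [//|/same_ends_in /orP [/eqP hu|/eqP hu]].
    + by move: hv; rewrite -hv' -E1 hu eqxx.
    + by move: hv; rewrite -hv' -E1 hu -/y Hxy eqxx.
  have hx : (vmap f x == v') = false by rewrite eq_sym (negbTE hv).
  rewrite (big_pred1 v Hfib) in E; rewrite (big_pred1 v Hfib) in EA; rewrite (big_pred1 v Hfib) in EW.
  rewrite -/x -/y Hxy hx /= !addn0 andbF in E EW.
  by move: (Hst v); rewrite /stab EW EA -E addn0.
Qed.

Lemma sum_card_le1 n (C : 'I_n -> rat) (S : {set 'I_n}) :
  (#|S| <= 1)%N -> (forall i, C i <= 1) -> wsum C S <= 1.
Proof.
move=> hS hC; case: (posnP #|S|) => [/cards0_eq ->|h].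
  by rewrite /wsum big_set0 ler01.
have : #|S| == 1%N by rewrite eqn_leq hS h.
by case/cards1P => x ->; rewrite /wsum big_set1.
Qed.

Lemma wsum_split n (C : 'I_n -> rat) (S : {set 'I_n}) :
  \sum_(i < n) C i = wsum C S + wsum C (~: S).
Proof.
rewrite /wsum (bigID (mem S)) /=; congr (_ + _).
by apply: eq_bigl => i; rewrite in_setC.
Qed.

Lemma L1 g n (A B : 'I_n -> rat) (S : {set 'I_n}) :
  weight_datum g A -> weight_datum g B -> chamber_le g A B ->
  1 < wsum A S -> 1 < wsum B S.
Proof.
move=> [hA _] [hB hBs] hle h1.
case: (leqP #|S| 1) => hS.
  have := sum_card_le1 hS (fun i => (hA i).2); by rewrite leNgt h1.
case hw: (wall_index g S); first by apply: hle.
move: hw; rewrite /wall_index; case: g hBs hle => [|g] hBs hle; last first.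
  have hn : (#|S| <= n)%N by have := max_card (mem S); rewrite card_ord.
  by rewrite hS hn.
rewrite hS /= => /negbT; rewrite -ltnNge => hS2.
have hC : (#|~: S| <= 1)%N.
  have := cardsC S; rewrite card_ord; move: hS2 hS; set a := #|S|; set b := #|~: S|; lia.
have := sum_card_le1 hC (fun i => (hB i).2).
move: hBs; rewrite (wsum_split B S) mulr0n mulr0; lra.
Qed.

Lemma L0 n (A B : 'I_n -> rat) (S : {set 'I_n}) :
  (forall i, 0 < B i) -> 0 < wsum A S -> 0 < wsum B S.
Proof.
move=> hB h0; case: (eqVneq S set0) => [hS|/set0Pn [x hx]].
  by move: h0; rewrite hS /wsum big_set0 ltxx.
rewrite /wsum (bigD1 x) //=; apply: ltr_pwDl; first exact: hB.
by apply: sumr_ge0 => i _; apply: ltW.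
Qed.

Lemma isolated n g (B : 'I_n -> rat) (G : wmgraph n) (v : 'I_(nv G)) :
  weight_datum g B -> connected_graph G ->
  (betti1 G + \sum_(u : 'I_(nv G)) wt u)%N = g ->
  wt v = 0%N -> valE v = 0%N -> 2 < valA B v.
Proof.
move=> [_ hBs] [hn hconn] hg hw hE.
have Hend : forall j, ((ends j).1 == v) || ((ends j).2 == v) = false.
  move=> j; move/eqP: hE; rewrite sum_nat_eq0 => /forallP /(_ j) /=.
  by case: ((ends j).1 == v); case: ((ends j).2 == v).
have Hall : forall y, y = v.
  move=> y; move: (hconn v y) => /connectP [p hp ->].
  case: p hp => [|x p] //= /andP [/existsP [j hj] _].
  move: hj (Hend j); rewrite /same_ends => /orP [/eqP -> | /eqP ->] /=;
    by rewrite eqxx ?orbT.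
have hnv : nv G = 1%N.
  case: (leqP (nv G) 1) => h2; first lia.
  have := Hall (Ordinal hn); have := Hall (Ordinal h2).
  by move=> <- /(congr1 val).
have hne : ne G = 0%N.
  case: (posnP (ne G)) => // h.
  by have := Hend (Ordinal h); rewrite (Hall (ends _).1) eqxx.
have hsw : (\sum_(u : 'I_(nv G)) wt u = 0)%N.
  by apply: big1 => u _; rewrite (Hall u).
move: hg; rewrite hsw /betti1 hne hnv => hg; subst g.
have -> : valA B v = \sum_(i < n) B i.
  by apply: eq_bigl => i; rewrite (Hall (leg G i)) eqxx.
move: hBs; rewrite mulr0n mulr0; lra.
Qed.

Lemma AtoB g n (A B : 'I_n -> rat) (G : wmgraph n) :
  weight_datum g A -> weight_datum g B -> chamber_le g A B ->
  stable g A G -> stable g B G.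
Proof.
move=> wA wB hle [hc [hg hv]]; split; [exact: hc | split; [exact: hg|]].
move=> v; have hA := hv v.
set S := [set i | leg G i == v].
have hval : forall C, valA C v = wsum C S.
  by move=> C; rewrite /valA /wsum; apply: eq_bigl => i; rewrite inE.
have hB0 : 0 <= valA B v by apply: sumr_ge0 => i _; apply: ltW; case: wB => /(_ i) [].
have Hm : 2 * (wt v)%:R + (valE v)%:R = ((2 * wt v + valE v)%N)%:R :> rat.
  by rewrite natrD natrM.
case: (leqP 3 (2 * wt v + valE v)) => h3.
  have : (3%:R <= ((2 * wt v + valE v)%N)%:R :> rat) by rewrite ler_nat.
  rewrite -Hm; lra.
have [h2|[h1|h0]] : ((2 * wt v + valE v = 2) \/ (2 * wt v + valE v = 1)
     \/ (wt v = 0 /\ valE v = 0))%N.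
  by move: h3; set w := wt v; set e := valE v; lia.
- move: Hm hA; rewrite h2 => Hm hA.
  have : 0 < valA A v by lra.
  have hBpos : forall i, 0 < B i by case: wB => hh _ i; case: (hh i).
  rewrite !hval => hA0.
  have hB' := L0 hBpos hA0.
  lra.
- move: Hm hA; rewrite h1 => Hm hA.
  have : 1 < valA A v by lra.
  rewrite !hval => /(L1 wA wB hle) hB.
  lra.
- case: h0 => hw hE.
  have := isolated wB hc hg hw hE.
  move: Hm; rewrite hw hE /= => Hm; lra.
Qed.

Lemma back g n (A B : 'I_n -> rat) (G H : wmgraph n) (f : gmap G H) :
  morph (stable g B) f -> stable g A G -> stable g A H /\ morph (stable g A) f.
Proof.
elim => {G H f} [G H f QG [hc [hg _]] el | G H K f h _ IH1 _ IH2] PG.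
  have PH : stable g A H.
    split; [exact: hc | split; [exact: hg|]].
    case: el => [iso | [e ctr]].
    + exact: (pres_iso iso PG.2.2).
    + exact: (pres_contr ctr PG.2.2).
  by split => //; apply: morph_elem.
have [PH m1] := IH1 PG; have [PK m2] := IH2 PH.
by split => //; apply: morph_comp.
Qed.

Theorem mainTheorem4 (g n : nat) (A B : 'I_n -> rat) :
  (1 <= n)%N ->
  weight_datum g A -> weight_datum g B ->
  in_chamber g A -> in_chamber g B ->
  chamber_le g A B ->
  full_subcategory (stable g A) (stable g B).
Proof.
move=> _ wA wB _ _ hle; split; first by move=> G; apply: AtoB.
move=> G H f PG PH; split.
  elim => {G H f PG PH} [G H f pG pH el | G H K f h _ IH1 _ IH2].
    by apply: morph_elem => //; apply: (AtoB wA wB hle).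
  exact: morph_comp.
by move=> hm; case: (back hm PG).
Qed.
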